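(* Let $K$ be an algebraically closed field, complete with respect to a non-trivial non-archimedean absolute value $|\cdot|_v$, with $\mathrm{char}(K)=0$ or $\mathrm{char}(K)>d$, and let $f\in\mathrm{Poly}_{N,d}(K)$. Then: (1) for every $D\in\mathrm{Div}^*_K(\mathbb{P}^N)$ the limit $G_{f,v}(D)=\lim_{n\to\infty}d^{-n}\lambda_v(f^n_*(D))$ exists; (2) $G_{f,v}(f_*(D))=dG_{f,v}(D)$ for all $D\in\mathrm{Div}^*_K(\mathbb{P}^N)$; (3) if $D\in\mathrm{Div}^*_K(\mathbb{P}^N)$ is preperiodic for $f$, then $G_{f,v}(D)=0$; (4) if $\lambda_v(D)>\mathcal{B}_v(f)$, then $G_{f,v}(D)=\lambda_v(D)$; (5) for every $D\in\mathrm{Div}^*_K(\mathbb{P}^N)$, $|G_{f,v}(D)-\lambda_v(D)|\le 2\mathcal{B}_v(f)$.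
   Context: $N\ge1$, $d\ge2$. $\mathrm{Ind}^*(N,d)$: multi-indices $I=(I_0,\dots,I_N)$ with $\sum I_j=d$, $0<I_N<d$. $\mathrm{Poly}_{N,d}(K)$: tuples $(a_{i,I})_{0\le i<N,I\in\mathrm{Ind}^*(N,d)}$ in $K$, giving $f=[f_0:\cdots:f_N]$ with $f_i=x_i^d+\sum_Ia_{i,I}\mathbf{x}^I$ ($i<N$), $f_N=x_N^d$; $\mathcal{B}_v(f)=\log^+\max|a_{i,I}|_v^{1/I_N}$. $\mathrm{Div}^*_K(\mathbb{P}^N)$: effective divisors over $K$ defined by a form $F_D$ with $F_D(x_0,\dots,x_{N-1},0)=\prod_{i<N}x_i^{e_i}$; $\lambda_v(D)=\log^+\sup_{|\beta_0|_v=\cdots=|\beta_{N-1}|_v=1}\max\{|\beta_N|_v^{-1}:F_D(\beta)=0\}$. $f_*(D)$: push-forward divisor, defined by the Macaulay-resultant form $\mathrm{Res}(F_D,f)$, $\mathrm{Res}(F,f)(y_0,\dots,y_{N-1},1)=\mathrm{Res}_{x}(F,y_0x_N^d-f_0,\dots,y_{N-1}x_N^d-f_{N-1})$; its points are the images of points of $D$; $f(D)$ denotes its radical (reduced divisor with the same support). $D$ is preperiodic for $f$ if the sequence $f^n(D)$, $n\ge0$, takes only finitely many values. *)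

(* Defs.v *)
From HB Require Import structures.
From mathcomp Require Import all_boot all_order all_algebra.
From mathcomp Require Import all_classical all_reals all_analysis.
From mathcomp Require mpoly.
Set Implicit Arguments. Unset Strict Implicit. Unset Printing Implicit Defensive.
Import Order.TTheory GRing.Theory Num.Theory.
Import numFieldNormedType.Exports.
Local Open Scope ring_scope.
Local Open Scope classical_set_scope.

Section Defs.
Variables (R : realType) (K : fieldType).

Definition nonarch_absval (absv : K -> R) : Prop :=
  [/\ forall x, 0 <= absv x,
      forall x, absv x = 0 <-> x = 0,
      forall x y, absv (x * y) = absv x * absv y &
      forall x y, absv (x + y) <= Num.max (absv x) (absv y)].

Definition nontrivial_absval (absv : K -> R) : Prop :=
  exists x, absv x != 0 /\ absv x != 1.

Definition complete_absval (absv : K -> R) : Prop :=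
  forall u : nat -> K,
    (forall e : R, 0 < e -> exists M : nat, forall m n : nat,
        (M <= m)%N -> (M <= n)%N -> absv (u m - u n) < e) ->
    exists l : K, forall e : R, 0 < e -> exists M : nat, forall n : nat,
        (M <= n)%N -> absv (u n - l) < e.

Definition logp (x : R) : R := if x <= 1 then 0 else ln x.

Definition mindex (N d : nat) := {ffun 'I_N.+1 -> 'I_d.+1}.

Definition Ind_star (N d : nat) : pred (mindex N d) :=
  [pred I : mindex N d | (\sum_(j < N.+1) (I j : nat) == d)%N
                        && (0 < I ord_max < d)%N].
Arguments Ind_star : clear implicits.

(* f = [f_0 : ... : f_N] attached to the coefficient tuple a = (a_{i,I}),
   i < N, I in Ind^*(N,d) (values of a outside Ind^*(N,d) are ignored);
   coordinates are indexed by 'I_N.+1, the last one (ord_max) being x_N. *)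
Definition polyf (N d : nat) (a : 'I_N -> mindex N d -> K)
    (x : 'I_N.+1 -> K) : 'I_N.+1 -> K :=
  fun j => if unlift ord_max j is Some i then
             x j ^+ d + \sum_(I in Ind_star N d)
                           a i I * \prod_(k < N.+1) x k ^+ (I k : nat)
           else x j ^+ d.

Definition Bv (absv : K -> R) (N d : nat) (a : 'I_N -> mindex N d -> K) : R :=
  logp (\big[Num.max/0]_(i < N) \big[Num.max/0]_(I in Ind_star N d)
          (absv (a i I) `^ ((I ord_max : nat)%:R)^-1)).

(* Div^*_K(P^N): forms F (homogeneous polynomials in x_0..x_N) with
   F(x_0,...,x_{N-1},0) = prod_{i<N} x_i^{e_i} *)
Definition Div_star (N : nat) (F : mpoly.mpoly N.+1 K) : Prop :=
  (exists e : nat, all [pred m | mpoly.mdeg m == e] (mpoly.msupp F)) /\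
  exists ex : 'I_N -> nat, forall x : 'I_N.+1 -> K, x ord_max = 0 ->
     mpoly.meval x F = \prod_(i < N) x (widen_ord (leqnSn N) i) ^+ ex i.

(* support of a divisor, as a cone in K^{N+1} *)
Definition zeroset (N : nat) (F : mpoly.mpoly N.+1 K) : set ('I_N.+1 -> K) :=
  [set x | mpoly.meval x F = 0].

(* support of the push-forward f_*(D): the image of the support of D *)
Definition push (N d : nat) (a : 'I_N -> mindex N d -> K)
    (Z : set ('I_N.+1 -> K)) : set ('I_N.+1 -> K) :=
  [set polyf a x | x in Z].

(* lambda_v of a divisor with support Z:
   log^+ sup { |b_N|^{-1} : b in Z, |b_0| = ... = |b_{N-1}| = 1 }
   (= sup of the log^+ values, and 0 if there is no such b). *)
Definition lambdav (absv : K -> R) (N : nat) (Z : set ('I_N.+1 -> K)) : R :=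
  sup ([set 0] `|`
       [set logp ((absv (b ord_max))^-1) | b in
          [set b | Z b /\ forall i : 'I_N.+1, i != ord_max -> absv (b i) = 1]]).

Definition Gseq (absv : K -> R) (N d : nat) (a : 'I_N -> mindex N d -> K)
    (Z : set ('I_N.+1 -> K)) : nat -> R :=
  fun n => lambdav absv (iter n (push a) Z) / (d ^ n)%:R.

Definition Gv (absv : K -> R) (N d : nat) (a : 'I_N -> mindex N d -> K)
    (Z : set ('I_N.+1 -> K)) : R :=
  limn (Gseq absv a Z).

Definition preperiodic (N d : nat) (a : 'I_N -> mindex N d -> K)
    (Z : set ('I_N.+1 -> K)) : Prop :=
  finite_set (range (fun n : nat => iter n (push a) Z)).

End Defs.

(* Main.v *)
Require Import Defs.
From HB Require Import structures.
From mathcomp Require Import all_boot all_order all_algebra.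
From mathcomp Require Import all_classical all_reals all_analysis.
From mathcomp Require mpoly.
From mathcomp Require Import ring lra.
From mathcomp Require finmap.
Set Implicit Arguments. Unset Strict Implicit. Unset Printing Implicit Defensive.
Import Order.TTheory GRing.Theory Num.Theory.
Import numFieldNormedType.Exports.
Local Open Scope ring_scope.
Local Open Scope classical_set_scope.
Section Seq.
Variable R : realType.

Lemma seq_step (lam : nat -> R) (B : R) (d : nat) :
  (forall n, lam n.+1 <= d%:R * Num.max (lam n) B) ->
  (forall n, B < lam n -> d%:R * lam n <= lam n.+1) ->
  forall n, B < lam n -> lam n.+1 = d%:R * lam n.
Proof.
move=> h1 h2 n hn; apply/eqP; rewrite eq_le h2 // andbT.
by have := h1 n; rewrite (max_idPl (ltW hn)).
Qed.

Lemma seq_main (lam : nat -> R) (B : R) (d : nat) :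
  (2 <= d)%N -> 0 <= B -> (forall n, 0 <= lam n) ->
  (forall n, lam n.+1 <= d%:R * Num.max (lam n) B) ->
  (forall n, B < lam n -> d%:R * lam n <= lam n.+1) ->
  let g := fun n => lam n / (d ^ n)%:R in
  [/\ cvgn g, 0 <= limn g, limn g <= Num.max (lam 0) B,
     (B < lam 0 -> limn g = lam 0) &
     ((exists M, forall n, lam n <= M) -> limn g = 0)].
Proof.
move=> hd hB h0 h1 h2 g.
have dpos : (0 < d)%N by apply: leq_trans hd.
have dR : (0 : R) < d%:R by rewrite ltr0n.
have dnR : forall n, (0 : R) < (d ^ n)%:R by move=> n; rewrite ltr0n expn_gt0 dpos.
have hs := seq_step h1 h2.
have key : forall n, B < lam n -> forall k, lam (n + k)%N = (d ^ k)%:R * lam n.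
  move=> n hn; elim=> [|k IH]; first by rewrite addn0 expn0 mul1r.
  rewrite addnS hs; last first.
    rewrite IH; apply: (lt_le_trans hn); rewrite ler_pMl ?(le_lt_trans hB hn) //.
    by rewrite ler1n expn_gt0 dpos.
  by rewrite IH expnS natrM mulrA.
set m := Num.max (lam 0) B.
have hBm : B <= m by rewrite le_max lexx orbT.
have hm0 : 0 <= m by apply: le_trans hB hBm.
have d1 : forall n, (1 : R) <= (d ^ n)%:R by move=> n; rewrite ler1n expn_gt0 dpos.
have bnd : forall n, lam n <= (d ^ n)%:R * m.
  elim=> [|n IH]; first by rewrite expn0 mul1r le_max lexx.
  apply: (le_trans (h1 n)); rewrite expnS natrM -mulrA ler_pM2l //.
  rewrite ge_max IH /=; apply: (le_trans hBm).
  by rewrite ler_peMl.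
have g0 : forall n, 0 <= g n by move=> n; rewrite /g divr_ge0 // ltW.
have gm : forall n, g n <= m.
  by move=> n; rewrite /g ler_pdivrMr // mulrC bnd.
have [[n0 hn0]|hno] := pselect (exists n, B < lam n).
- have hc : forall n, (n0 <= n)%N -> g n = g n0.
    move=> n hn; rewrite /g -(subnKC hn) key // expnD natrM.
    rewrite [X in _ / X]mulrC -mulf_div divff ?mul1r //.
    by rewrite gt_eqF.
  have hcv : g @ \oo --> g n0.
    by apply: cvg_near_cst; near=> n; apply: hc; near: n; exists n0.
  have hL : limn g = g n0 by apply: cvg_lim.
  split.
  + exact: (cvgP _ hcv).
  + by rewrite hL.
  + by rewrite hL.
  + move=> hl0; rewrite hL /g; have := key 0%N hl0 n0; rewrite add0n => ->.
    by rewrite mulrAC divff ?mul1r // gt_eqF.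
  + move=> [M hM]; exfalso.
    have l0 : 0 < lam n0 by apply: le_lt_trans hB hn0.
    have M0 : 0 <= M / lam n0 by rewrite divr_ge0 // (le_trans (h0 0%N)).
    set k := Num.Def.archi_bound (M / lam n0).
    have hk := archi_boundP M0.
    have := hM (n0 + k)%N; rewrite key // leNgt => /negP; apply.
    rewrite -ltr_pdivrMr //; apply: (lt_le_trans hk).
    by rewrite ler_nat ltnW // ltn_expl.
- have hno' : forall n, lam n <= B by move=> n; rewrite leNgt; apply/negP => h; apply: hno; exists n.
  have hcv : g @ \oo --> 0.
    apply: (@squeeze_cvgr _ _ _ _ (fun=> 0) (geometric B (d%:R^-1))).
    + near=> n; rewrite g0 /= /g natrX exprVn ler_pM2r ?hno' //.
      by rewrite invr_gt0 exprn_gt0.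
    + exact: cvg_cst.
    + apply: cvg_geometric; rewrite ger0_norm ?invr_ge0 ?ler0n //.
      by rewrite invr_lt1 ?unitfE ?gt_eqF // ltr1n.
  have hL : limn g = 0 by apply: cvg_lim.
  rewrite hL; split.
  + exact: hcv.
  + by [].
  + by [].
  + by move=> h; exfalso; apply: hno; exists 0%N.
  + by [].
Unshelve. all: end_near. Qed.

Lemma seq_shift (lam : nat -> R) (B : R) (d : nat) :
  (2 <= d)%N -> 0 <= B -> (forall n, 0 <= lam n) ->
  (forall n, lam n.+1 <= d%:R * Num.max (lam n) B) ->
  (forall n, B < lam n -> d%:R * lam n <= lam n.+1) ->
  limn (fun n => lam n.+1 / (d ^ n)%:R) = d%:R * limn (fun n => lam n / (d ^ n)%:R).
Proof.
move=> hd hB h0 h1 h2.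
have [hc _ _ _ _] := seq_main hd hB h0 h1 h2.
have dpos : (0 < d)%N by apply: leq_trans hd.
set g := (fun n => lam n / (d ^ n)%:R) in hc *.
have -> : (fun n => lam n.+1 / (d ^ n)%:R) = (fun n => d%:R * g n.+1).
  apply: funext => n; rewrite /g expnS natrM; field.
  by rewrite !pnatr_eq0 -!lt0n expn_gt0 dpos.
apply: cvg_lim => //; apply: cvgMl_tmp.
by rewrite (cvg_shiftS g).
Qed.

Lemma seq_dist (lam : nat -> R) (B L : R) :
  0 <= B -> 0 <= lam 0 -> 0 <= L -> L <= Num.max (lam 0) B -> (B < lam 0 -> L = lam 0) ->
  `|L - lam 0| <= 2 * B.
Proof.
move=> hB h0 hL hLm hl.
have [lt|le] := ltP B (lam 0).
  by rewrite hl // subrr normr0 mulr_ge0.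
move: hLm; rewrite (max_idPr le) => hLB.
rewrite ler_norml; apply/andP; split; lra.
Qed.
End Seq.
Section Ab.
Variables (R : realType) (K : fieldType) (absv : K -> R).
Hypothesis habs : nonarch_absval absv.

Lemma ab_ge0 x : 0 <= absv x. Proof. by case: habs. Qed.
Lemma ab_eq0 x : absv x = 0 <-> x = 0. Proof. by case: habs. Qed.
Lemma abM x y : absv (x * y) = absv x * absv y. Proof. by case: habs. Qed.
Lemma abD x y : absv (x + y) <= Num.max (absv x) (absv y). Proof. by case: habs. Qed.
Lemma ab0 : absv 0 = 0. Proof. by apply/ab_eq0. Qed.
Lemma ab_neq0 x : x != 0 -> 0 < absv x.
Proof.
move=> hx; rewrite lt_def ab_ge0 andbT; apply/eqP => /ab_eq0 h.
by rewrite h eqxx in hx.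
Qed.
Lemma ab1 : absv 1 = 1.
Proof.
have h := abM 1 1; rewrite mulr1 in h.
have h0 : 0 < absv 1 by apply: ab_neq0; exact: oner_neq0.
by apply: (mulfI (lt0r_neq0 h0)); rewrite mulr1 -h.
Qed.
Lemma abN1 : absv (-1) = 1.
Proof.
have h := abM (-1) (-1); rewrite mulrNN mulr1 ab1 in h.
have h0 := ab_ge0 (-1).
apply/eqP; rewrite eq_le; apply/andP; split; nra.
Qed.
Lemma abN x : absv (- x) = absv x. Proof. by rewrite -mulN1r abM abN1 mul1r. Qed.
Lemma abX x n : absv (x ^+ n) = absv x ^+ n.
Proof. by elim: n => [|n IH]; rewrite ?expr0 ?ab1 // !exprS abM IH. Qed.
Lemma ab_prod (I : Type) (r : seq I) (P : pred I) (F : I -> K) :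
  absv (\prod_(i <- r | P i) F i) = \prod_(i <- r | P i) absv (F i).
Proof. exact: (big_morph absv abM ab1). Qed.
Lemma ab_sum_le (I : Type) (r : seq I) (P : pred I) (F : I -> K) (M : R) :
  0 <= M -> (forall i, P i -> absv (F i) <= M) ->
  absv (\sum_(i <- r | P i) F i) <= M.
Proof.
move=> hM hF; apply: (big_ind (fun y => absv y <= M)) => //.
- by rewrite ab0.
- by move=> x y hx hy; apply: (le_trans (abD x y)); rewrite ge_max hx hy.
Qed.
Lemma ab_sum_le_seq (I : Type) (r : seq I) (F : I -> K) (M : R) :
  0 <= M -> (forall i, List.In i r -> absv (F i) <= M) ->
  absv (\sum_(i <- r) F i) <= M.
Proof.
move=> hM; elim: r => [|x r IH] h; first by rewrite big_nil ab0.
rewrite big_cons; apply: le_trans (abD _ _) _.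
rewrite ge_max h /= ?IH //; first by move=> i hi; apply: h; right.
by left.
Qed.
Lemma ab_sum_lt (I : Type) (r : seq I) (P : pred I) (F : I -> K) (M : R) :
  0 < M -> (forall i, P i -> absv (F i) < M) ->
  absv (\sum_(i <- r | P i) F i) < M.
Proof.
move=> hM hF; apply: (big_ind (fun y => absv y < M)) => //.
- by rewrite ab0.
- by move=> x y hx hy; apply: (le_lt_trans (abD x y)); rewrite gt_max hx hy.
Qed.
Lemma ab_addl x y : absv y < absv x -> absv (x + y) = absv x.
Proof.
move=> h; apply/eqP; rewrite eq_le; apply/andP; split.
  by apply: (le_trans (abD x y)); rewrite ge_max lexx ltW.
have := abD (x + y) (- y); rewrite addrK abN.
by rewrite le_max => /orP [//|h2]; rewrite leNgt h in h2.
Qed.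
End Ab.

Lemma bigmax_In (R : realType) (I : Type) (r : seq I) (G : I -> R) i :
  List.In i r -> G i <= \big[Num.max/0]_(j <- r) G j.
Proof.
elim: r => [//|x r IH] /= [->|h]; rewrite big_cons le_max ?lexx //.
by rewrite IH ?orbT.
Qed.

Section Logp.
Variable R : realType.
Lemma logp_ge0 (x : R) : 0 <= logp x.
Proof. by rewrite /logp; case: ifPn => // h; rewrite ln_ge0 // ltW // ltNge. Qed.
Lemma logp_le (u v : R) : 0 <= u -> u <= v -> logp u <= logp v.
Proof.
move=> hu huv; rewrite /logp.
case: (ifPn (v <= 1)) => hv; case: (ifPn (u <= 1)) => hu1 //.
- by rewrite (le_trans huv hv) in hu1.
- by rewrite ln_ge0 // ltW // ltNge.
have u1 : 1 < u by rewrite ltNge.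
have v1 : 1 < v by rewrite ltNge.
by rewrite ler_ln // posrE (lt_trans ltr01).
Qed.

Lemma logpX (v : R) n : 0 <= v -> logp (v ^+ n) = logp v *+ n.
Proof.
move=> hv; rewrite /logp.
case: (ifPn (v <= 1)) => h1.
  by rewrite exprn_ile1 // mul0rn.
have v1 : 1 < v by rewrite ltNge.
case: n => [|n]; first by rewrite expr0 lexx mulr0n.
have := exprn_egt1 n.+1 v1; rewrite /= => h.
by rewrite leNgt h /= lnXn // (lt_trans ltr01).
Qed.

Lemma logp_maxE (x : R) : logp x = ln (Num.max 1 x).
Proof.
rewrite /logp; case: ifPn => h.
  by rewrite (max_idPl h) ln1.
have x1 : 1 < x by rewrite ltNge.
by rewrite (max_idPr (ltW x1)).
Qed.

Lemma logp_gt (M v : R) : 1 <= M -> ln M < logp v -> M < v.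
Proof.
move=> M1; rewrite /logp; case: ifPn => hv.
  by move=> h; have := ln_ge0 M1; rewrite leNgt h.
have v1 : 1 < v by rewrite ltNge.
have M0 : 0 < M by apply: lt_le_trans ltr01 M1.
have v0 : 0 < v by apply: lt_trans ltr01 v1.
by rewrite ltr_ln ?posrE.
Qed.

Lemma logp_le_ln (v M : R) : 0 <= v -> v <= M -> 1 <= M -> logp v <= ln M.
Proof.
move=> v0 vM M1; apply: (le_trans (logp_le v0 vM)).
by rewrite logp_maxE (max_idPr M1).
Qed.
End Logp.
Section Poly.
Variables (R : realType) (K : fieldType) (absv : K -> R).
Hypothesis habs : nonarch_absval absv.
Variables (N d : nat) (a : 'I_N -> mindex N d -> K).
Hypothesis hN : (1 <= N)%N.
Hypothesis hd : (2 <= d)%N.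

Definition Mx := \big[Num.max/0]_(i < N) \big[Num.max/0]_(I in @Ind_star N d)
          (absv (a i I) `^ ((I ord_max : nat)%:R)^-1).
Definition Mp := Num.max 1 Mx.

Lemma Mp1 : 1 <= Mp. Proof. by rewrite le_max lexx. Qed.
Lemma Mp0 : 0 <= Mp. Proof. exact: le_trans ler01 Mp1. Qed.
Lemma BvE : Bv absv a = ln Mp. Proof. exact: logp_maxE. Qed.
Lemma Bv_ge0 : 0 <= Bv absv a. Proof. by rewrite BvE ln_ge0 // Mp1. Qed.

Lemma Ind_facts (I : mindex N d) : I \in @Ind_star N d ->
  [/\ (0 < I ord_max)%N, (I ord_max < d)%N &
      (\sum_(k < N) (I (widen_ord (leqnSn N) k) : nat) = d - I ord_max)%N].
Proof.
rewrite inE => /andP [/eqP hs /andP [h1 h2]]; split => //.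
move: hs; rewrite big_ord_recr /= => hs.
by apply/eqP; rewrite -(eqn_add2r (I ord_max)) subnK ?(ltnW h2) // hs.
Qed.

Lemma coef_bnd i (I : mindex N d) : I \in @Ind_star N d ->
  absv (a i I) <= Mp ^+ (I ord_max).
Proof.
move=> hI; have [k0 _ _] := Ind_facts hI.
set k := (I ord_max : nat).
have h : absv (a i I) `^ (k%:R^-1) <= Mp.
  apply: (@le_trans _ _ Mx); last by rewrite le_max lexx orbT.
  rewrite /Mx; apply: le_trans (le_bigmax _ _ i).
  by apply: (le_bigmax_cond _ (fun J : mindex N d => absv (a i J) `^ ((J ord_max : nat)%:R)^-1) hI).
have -> : absv (a i I) = (absv (a i I) `^ (k%:R^-1)) ^+ k.
  rewrite -powR_mulrn ?powR_ge0 // -powRrM mulVf ?powRr1 ?(ab_ge0 habs) //.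
  by rewrite pnatr_eq0 -lt0n.
by rewrite lerXn2r // nnegrE ?powR_ge0 ?Mp0.
Qed.

Definition unitp (x : 'I_N.+1 -> K) := forall i : 'I_N.+1, i != ord_max -> absv (x i) = 1.

Lemma widen_neq (j : 'I_N) : widen_ord (leqnSn N) j != ord_max.
Proof.
apply/eqP => /(congr1 val) /= h; have := ltn_ord j; by rewrite h ltnn.
Qed.

Lemma neq_widen (j : 'I_N.+1) : j != ord_max -> exists i : 'I_N, j = widen_ord (leqnSn N) i.
Proof.
move=> hj; have hj' : (j < N)%N.
  rewrite ltn_neqAle -ltnS ltn_ord andbT; apply: contra hj => /eqP h.
  by apply/eqP; apply: val_inj.
by exists (Ordinal hj'); apply: val_inj.
Qed.

Lemma polyf_max x : polyf a x ord_max = x ord_max ^+ d.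
Proof. by rewrite /polyf unlift_none. Qed.

Lemma polyf_ne x (j : 'I_N.+1) : j != ord_max -> exists i,
  polyf a x j = x j ^+ d + \sum_(I in @Ind_star N d) a i I * \prod_(k < N.+1) x k ^+ (I k : nat).
Proof.
move=> hj; rewrite eq_sym in hj; case: (unlift_some hj) => i _ hu.
by exists i; rewrite /polyf hu.
Qed.

Lemma mono_bnd (x : 'I_N.+1 -> K) (rho : R) (I : mindex N d) : I \in @Ind_star N d ->
  0 <= rho -> (forall j : 'I_N, absv (x (widen_ord (leqnSn N) j)) <= rho) ->
  absv (\prod_(k < N.+1) x k ^+ (I k : nat)) <=
    rho ^+ (d - I ord_max) * absv (x ord_max) ^+ (I ord_max).
Proof.
move=> hI r0 hx; have [_ _ hs] := Ind_facts hI.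
rewrite big_ord_recr /= (abM habs) (abX habs).
apply: ler_wpM2r; first by rewrite exprn_ge0 // (ab_ge0 habs).
rewrite -hs -prodrXr (ab_prod habs); apply: ler_prod => k _.
rewrite (abX habs) exprn_ge0 ?(ab_ge0 habs) //=.
by rewrite lerXn2r // nnegrE ?(ab_ge0 habs).
Qed.

Lemma term_bnd (x : 'I_N.+1 -> K) (rho : R) i (I : mindex N d) : I \in @Ind_star N d ->
  0 <= rho -> (forall j : 'I_N, absv (x (widen_ord (leqnSn N) j)) <= rho) ->
  absv (a i I * \prod_(k < N.+1) x k ^+ (I k : nat)) <=
    rho ^+ (d - I ord_max) * (Mp * absv (x ord_max)) ^+ (I ord_max).
Proof.
move=> hI r0 hx; rewrite (abM habs) exprMn mulrCA.
apply: ler_pM; rewrite ?(ab_ge0 habs) ?coef_bnd //.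
exact: mono_bnd.
Qed.

Lemma step_lower (x : 'I_N.+1 -> K) : unitp x -> ln Mp < logp ((absv (x ord_max))^-1) ->
  unitp (polyf a x) /\
  logp ((absv (polyf a x ord_max))^-1) = logp ((absv (x ord_max))^-1) *+ d.
Proof.
move=> ux hlt.
set s := absv (x ord_max).
have s0 : 0 <= s := ab_ge0 habs _.
have hv := logp_gt Mp1 hlt.
have sp : 0 < s.
  rewrite lt_def s0 andbT; apply/eqP => h; move: hv; rewrite -/s h invr0 => h'.
  by have := le_lt_trans Mp1 h'; rewrite ltr10.
have Ms : Mp * s < 1 by rewrite -ltr_pdivlMr // div1r.
have Ms0 : 0 <= Mp * s by rewrite mulr_ge0 ?Mp0.
have hx1 : forall j : 'I_N, absv (x (widen_ord (leqnSn N) j)) <= 1.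
  by move=> j; rewrite ux ?widen_neq.
split.
- move=> j hj; have [i ->] := polyf_ne x hj.
  rewrite (ab_addl habs); first by rewrite (abX habs) ux // expr1n.
  rewrite (abX habs) ux // expr1n.
  apply: (le_lt_trans _ Ms); apply: (ab_sum_le habs) => // I hI.
  apply: le_trans (term_bnd i hI ler01 hx1) _.
  rewrite expr1n mul1r.
  have [k0 _ _] := Ind_facts hI.
  rewrite -(prednK k0) exprS; apply: ler_piMr => //.
  exact: exprn_ile1 Ms0 (ltW Ms).
- by rewrite polyf_max (abX habs) -exprVn logpX // invr_ge0.
Qed.

Lemma step_upper (Z : set ('I_N.+1 -> K)) (L : R) (y : 'I_N.+1 -> K) :
  (forall b, Z b -> unitp b -> logp ((absv (b ord_max))^-1) <= L) ->
  unitp y -> push a Z y -> logp ((absv (y ord_max))^-1) <= Num.max L (ln Mp) *+ d.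
Proof.
move=> hZ uy [x Zx hxy].
have dpos : (0 < d)%N by apply: leq_trans hd.
have s0 : 0 <= absv (x ord_max) := ab_ge0 habs _.
rewrite -hxy polyf_max (abX habs) -exprVn logpX ?invr_ge0 //.
rewrite lerMn2r; apply/orP; right.
set s := absv (x ord_max) in s0 *.
pose i0 : 'I_N := Ordinal hN.
pose F := fun i : 'I_N => absv (x (widen_ord (leqnSn N) i)).
case: (@arg_maxP _ _ _ i0 predT F isT) => im _ him.
have hr : forall j : 'I_N, absv (x (widen_ord (leqnSn N) j)) <= F im.
  by move=> j; exact: (him j isT).
set r := F im in hr.
have r0 : 0 <= r := ab_ge0 habs _.
have hyjm := uy _ (widen_neq im).
rewrite -hxy in hyjm.
have [i hpi] := polyf_ne x (widen_neq im).
rewrite hpi in hyjm.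
case: (leP r (Mp * s)) => hrs.
- have Ms0 : 0 <= Mp * s by rewrite mulr_ge0 ?Mp0.
  have hr' : forall j : 'I_N, absv (x (widen_ord (leqnSn N) j)) <= Mp * s.
    by move=> j; exact: le_trans (hr j) hrs.
  have h1 : 1 <= (Mp * s) ^+ d.
    rewrite -hyjm; apply: le_trans (abD habs _ _) _; rewrite ge_max; apply/andP; split.
      by rewrite (abX habs) lerXn2r // ?nnegrE ?(ab_ge0 habs) ?hr'.
    apply: (ab_sum_le habs); first exact: exprn_ge0.
    move=> I hI; apply: le_trans (term_bnd i hI Ms0 hr') _.
    have [_ hk _] := Ind_facts hI.
    by rewrite -exprD subnK // ltnW.
  have h2 : 1 <= Mp * s.
    rewrite leNgt; apply/negP => h.
    have h3 : (Mp * s) ^+ d < 1 by rewrite exprn_ilt1 // -lt0n.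
    by rewrite leNgt h3 in h1.
  have sp : 0 < s.
    rewrite lt_def s0 andbT; apply/eqP => h.
    by rewrite h mulr0 ler10 in h2.
  rewrite le_max; apply/orP; right.
  apply: logp_le_ln; rewrite ?invr_ge0 ?Mp1 //.
  by rewrite -div1r ler_pdivrMr.
- have rp : 0 < r by apply: le_lt_trans hrs; rewrite mulr_ge0 ?Mp0.
  have hsum : forall i', absv (\sum_(I in @Ind_star N d)
        a i' I * \prod_(k < N.+1) x k ^+ (I k : nat)) < r ^+ d.
    move=> i'; apply: (ab_sum_lt habs); first exact: exprn_gt0.
    move=> I hI; apply: le_lt_trans (term_bnd i' hI r0 hr) _.
    have [k0 hk _] := Ind_facts hI.
    have -> : r ^+ d = r ^+ (d - I ord_max) * r ^+ (I ord_max).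
      by rewrite -exprD subnK // ltnW.
    rewrite ltr_pM2l ?exprn_gt0 //.
    by rewrite ltr_pXn2r ?nnegrE ?mulr_ge0 ?Mp0 // ltW.
  have r1 : r = 1.
    have : absv (x (widen_ord (leqnSn N) im) ^+ d + \sum_(I in @Ind_star N d)
        a i I * \prod_(k < N.+1) x k ^+ (I k : nat)) = r ^+ d.
      by rewrite (ab_addl habs) ?(abX habs) // (abX habs) -/(F im) hsum.
    by rewrite hyjm => /esym/eqP; rewrite pexpr_eq1 // => /eqP.
  have ux : unitp x.
    move=> j hj; have [k ->] := neq_widen hj.
    apply/eqP; rewrite eq_le (le_trans (hr k)) ?r1 //=.
    rewrite leNgt; apply/negP => hlt.
    have hyk := uy _ (widen_neq k); rewrite -hxy in hyk.
    have [i2 hpi2] := polyf_ne x (widen_neq k); rewrite hpi2 in hyk.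
    have : absv (x (widen_ord (leqnSn N) k) ^+ d + \sum_(I in @Ind_star N d)
        a i2 I * \prod_(k < N.+1) x k ^+ (I k : nat)) < 1.
      apply: le_lt_trans (abD habs _ _) _; rewrite gt_max; apply/andP; split.
        by rewrite (abX habs) exprn_ilt1 ?(ab_ge0 habs) // -lt0n.
      by have := hsum i2; rewrite r1 expr1n.
    by rewrite hyk ltxx.
  by rewrite le_max (hZ x Zx ux).
Qed.

Lemma div_bound (F : mpoly.mpoly N.+1 K) : Div_star F -> exists L, 0 <= L /\
  forall b, zeroset F b -> unitp b -> logp ((absv (b ord_max))^-1) <= L.
Proof.
case=> _ [ex hex].
pose C := \big[Num.max/0]_(m <- mpoly.msupp F) absv (mpoly.mcoeff m F).
have C0 : 0 <= C.
  by apply: (big_ind (fun y => 0 <= y)) => // [x y hx hy|m _];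
    rewrite ?le_max ?hx ?(ab_ge0 habs).
exists (logp (Num.max 1 C)); split; first exact: logp_ge0.
move=> b Zb ub; rewrite /zeroset /= in Zb.
have s0 : 0 <= absv (b ord_max) := ab_ge0 habs _.
set s := absv (b ord_max) in s0 *.
apply: logp_le; first by rewrite invr_ge0.
case: (leP 1 s) => hs.
  by rewrite le_max invf_le1 ?hs // (lt_le_trans ltr01 hs).
pose b0 := fun j => if j == ord_max then 0 else b j.
have hb0 : mpoly.meval b0 F = \prod_(i < N) b0 (widen_ord (leqnSn N) i) ^+ ex i.
  by apply: hex; rewrite /b0 eqxx.
have e1 : absv (mpoly.meval b0 F) = 1.
  rewrite hb0 (ab_prod habs); apply: big1 => i _.
  by rewrite (abX habs) /b0 (negbTE (widen_neq i)) ub ?widen_neq // expr1n.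
have key : absv (mpoly.meval b F - mpoly.meval b0 F) <= C * s.
  rewrite !mpoly.mevalE -sumrB.
  apply: (ab_sum_le_seq habs); first by rewrite mulr_ge0.
  move=> m hm; rewrite -mulrBr (abM habs).
  apply: ler_pM; rewrite ?(ab_ge0 habs) //.
    exact: (bigmax_In _ hm).
  have [hm0|hm0] := eqVneq (mpoly.fun_of_multinom m ord_max) 0%N.
    rewrite (_ : \prod_i b i ^+ _ = \prod_i b0 i ^+ mpoly.fun_of_multinom m i).
      by rewrite subrr ab0.
    apply: eq_bigr => k _; rewrite /b0; case: eqP => [->|//].
    by rewrite hm0 !expr0.
  rewrite [X in _ - X](bigD1 ord_max) //= /b0 eqxx expr0n (negbTE hm0) mul0r subr0.
  rewrite (ab_prod habs) (bigD1 ord_max) //= big1 ?mulr1; last first.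
    by move=> k hk; rewrite (abX habs) ub // expr1n.
  rewrite (abX habs) -/s -(prednK (n := mpoly.fun_of_multinom m ord_max)) ?lt0n //.
  by rewrite exprS ler_piMr // exprn_ile1 // ltW.
have h1 : 1 <= C * s.
  by move: key; rewrite Zb sub0r (abN habs) e1.
have sp : 0 < s.
  rewrite lt_def s0 andbT; apply/eqP => h.
  by rewrite h mulr0 ler10 in h1.
rewrite le_max; apply/orP; right.
by rewrite -div1r ler_pdivrMr.
Qed.

Definition SS (Z : set ('I_N.+1 -> K)) : set R :=
  [set 0] `|` [set logp ((absv (b ord_max))^-1) | b in [set b | Z b /\ unitp b]].
Definition bnd (Z : set ('I_N.+1 -> K)) (L : R) :=
  forall b, Z b -> unitp b -> logp ((absv (b ord_max))^-1) <= L.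

Lemma lamE Z : lambdav absv Z = sup (SS Z). Proof. by []. Qed.

Lemma SS_sup Z L : bnd Z L -> 0 <= L -> has_sup (SS Z).
Proof.
move=> hb L0; split; first by exists 0; left.
exists L => v [->|[b [Zb ub] <-]] //.
exact: hb.
Qed.

Lemma SS_ub Z L : bnd Z L -> 0 <= L -> forall v, SS Z v -> v <= lambdav absv Z.
Proof. by move=> hb L0 v hv; rewrite lamE; apply: sup_upper_bound (SS_sup hb L0) _ hv. Qed.

Lemma lam_ge0 Z L : bnd Z L -> 0 <= L -> 0 <= lambdav absv Z.
Proof. by move=> hb L0; apply: (SS_ub hb L0); left. Qed.

Lemma bnd_lam Z L : bnd Z L -> 0 <= L -> bnd Z (lambdav absv Z).
Proof. by move=> hb L0 b Zb ub; apply: (SS_ub hb L0); right; exists b. Qed.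

Lemma bnd_push Z L : bnd Z L -> 0 <= L -> bnd (push a Z) (Num.max L (ln Mp) *+ d).
Proof. by move=> hb L0 y py uy; exact: (step_upper hb uy py). Qed.

Lemma iter_bnd Z L : bnd Z L -> 0 <= L ->
  forall n, exists L', bnd (iter n (push a) Z) L' /\ 0 <= L'.
Proof.
move=> hb L0; elim=> [|n [L' [hb' L'0]]]; first by exists L.
exists (Num.max L' (ln Mp) *+ d); split; first exact: bnd_push.
by rewrite mulrn_wge0 // le_max L'0.
Qed.

Lemma lam_h1 Z L : bnd Z L -> 0 <= L ->
  lambdav absv (push a Z) <= d%:R * Num.max (lambdav absv Z) (Bv absv a).
Proof.
move=> hb L0; have l0 := lam_ge0 hb L0.
rewrite lamE; apply: ge_sup; first by exists 0; left.
move=> v [->|[y [py uy] <-]].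
  by rewrite mulr_ge0 // le_max l0.
by rewrite BvE mulr_natl; exact: (step_upper (bnd_lam hb L0) uy py).
Qed.

Lemma lam_h2 Z L : bnd Z L -> 0 <= L -> Bv absv a < lambdav absv Z ->
  d%:R * lambdav absv Z <= lambdav absv (push a Z).
Proof.
move=> hb L0 hlt.
have dpos : (0 < d)%N by apply: leq_trans hd.
have dR : (0 : R) < d%:R by rewrite ltr0n.
have hb' := bnd_push hb L0.
have L'0 : 0 <= Num.max L (ln Mp) *+ d by rewrite mulrn_wge0 // le_max L0.
have h : lambdav absv Z <= Num.max (Bv absv a) (lambdav absv (push a Z) / d%:R).
  rewrite lamE; apply: ge_sup; first by exists 0; left.
  move=> v [->|[b [Zb ub] <-]].
    by rewrite le_max Bv_ge0.
  case: (leP (logp ((absv (b ord_max))^-1)) (Bv absv a)) => hv.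
    by rewrite le_max hv.
  rewrite BvE in hv; have [ub' he] := step_lower ub hv.
  rewrite le_max; apply/orP; right.
  rewrite ler_pdivlMr // mulr_natr -he.
  by apply: (SS_ub hb' L'0); right; exists (polyf a b) => //; split => //; exists b.
move: h; rewrite le_max => /orP [h|h].
  by rewrite leNgt hlt in h.
by rewrite -ler_pdivlMl // mulrC.
Qed.
End Poly.
Module FinB.
Import finmap.
Lemma fin_bnd (R : realType) (T : Type) (f : nat -> T) (h : T -> R) :
  finite_set (range f) -> exists M, forall n, h (f n) <= M.
Proof.
move=> fin; have [X hX] := finite_fsetP.1 (finite_image h fin).
exists (\big[Num.max/0]_(y <- X) y) => n.
have hx : h (f n) \in X.
  have : [set` X] (h (f n)) by rewrite -hX; exists (f n) => //; exists n.
  by [].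
by apply: (le_bigmax_seq 0 (h (f n)) predT id hx).
Qed.
End FinB.
Theorem lemma3p3 (R : realType) (K : closedFieldType) (absv : K -> R)
  (habs : nonarch_absval absv) (hnt : nontrivial_absval absv)
  (hcomp : complete_absval absv)
  (N d : nat) (hN : (1 <= N)%N) (hd : (2 <= d)%N)
  (hchar : forall p : nat, p \in [pchar K] -> (d < p)%N)
  (a : 'I_N -> mindex N d -> K) :
  [/\ (forall F : mpoly.mpoly N.+1 K, Div_star F ->
         cvgn (Gseq absv a (zeroset F))),
      (forall F : mpoly.mpoly N.+1 K, Div_star F ->
         Gv absv a (push a (zeroset F)) = d%:R * Gv absv a (zeroset F)),
      (forall F : mpoly.mpoly N.+1 K, Div_star F ->
         preperiodic a (zeroset F) -> Gv absv a (zeroset F) = 0),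
      (forall F : mpoly.mpoly N.+1 K, Div_star F ->
         Bv absv a < lambdav absv (zeroset F) ->
         Gv absv a (zeroset F) = lambdav absv (zeroset F)) &
      (forall F : mpoly.mpoly N.+1 K, Div_star F ->
         `|Gv absv a (zeroset F) - lambdav absv (zeroset F)| <= 2 * Bv absv a)].
Proof.
have key : forall F : mpoly.mpoly N.+1 K, Div_star F ->
    let lam := fun n => lambdav absv (iter n (push a) (zeroset F)) in
    [/\ forall n, 0 <= lam n,
        forall n, lam n.+1 <= d%:R * Num.max (lam n) (Bv absv a) &
        forall n, Bv absv a < lam n -> d%:R * lam n <= lam n.+1].
  move=> F hF lam.
  have [L [L0 hL]] := div_bound habs hF.
  have hit := iter_bnd habs a hN hd hL L0.
  split => n; have [L' [hb L'0]] := hit n.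
  - exact (lam_ge0 hb L'0).
  - rewrite /lam iterS; exact (lam_h1 habs a hN hd hb L'0).
  - rewrite /lam iterS; exact (lam_h2 habs hN hd hb L'0).
have B0 := Bv_ge0 absv a.
split.
- move=> F hF; have [h0 h1 h2] := key F hF.
  by have [] := seq_main hd B0 h0 h1 h2.
- move=> F hF; have [h0 h1 h2] := key F hF.
  rewrite /Gv.
  have -> : Gseq absv a (push a (zeroset F)) =
      (fun n => lambdav absv (iter n.+1 (push a) (zeroset F)) / (d ^ n)%:R).
    by apply: funext => n; rewrite /Gseq -iterSr.
  exact: seq_shift hd B0 h0 h1 h2.
- move=> F hF hpre; have [h0 h1 h2] := key F hF.
  have [_ _ _ _ h5] := seq_main hd B0 h0 h1 h2.
  apply: h5.
  have [M hM] := @FinB.fin_bnd R _ (fun n => iter n (push a) (zeroset F)) (@lambdav R K absv N) hpre.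
  by exists M => n; exact: hM n.
- move=> F hF hlt; have [h0 h1 h2] := key F hF.
  have [_ _ _ h4 _] := seq_main hd B0 h0 h1 h2.
  exact: h4.
- move=> F hF; have [h0 h1 h2] := key F hF.
  have [_ g0 gm h4 _] := seq_main hd B0 h0 h1 h2.
  exact: (@seq_dist R (fun n => lambdav absv (iter n (push a) (zeroset F))) _ _ B0 (h0 0%N) g0 gm h4).
Qed.
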